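(* Let $f:[0,1]\to\mathbb{R}$ with $f(0),f(1)\in\mathbb{Z}$, and let $n\in\mathbb{N}_+$, $n\ge 3$. Set, for $x\in[0,1]$, \[ \Phi_n(x):=(n+1)\int_0^1 \left(t^2+(1-t)^2\right)\frac{(nx-3)t^2(1-t)^{n-2}-(nx-2)t^3(1-t)^{n-3}+t^{nx}(1-t)^{n(1-x)}}{(1-2t)^2}\,dt. \] (a) If $f(x)-\Phi_n(x)$ is convex on $[0,1]$, then $\widetilde{B}_n(f)$ and $\widehat{B}_n(f)$ are convex on $[0,1]$. (b) If $f(x)+\Phi_n(x)$ is concave on $[0,1]$, then $\widetilde{B}_n(f)$ and $\widehat{B}_n(f)$ are concave on $[0,1]$.
   Context: For $n\in\mathbb{N}_+$ and $f:[0,1]\to\mathbb{R}$, define $\widetilde{B}_n(f)(x):=\sum_{k=0}^n \left[f\left(\frac{k}{n}\right)\binom{n}{k}\right]x^k(1-x)^{n-k}$, where $[\alpha]$ is the largest integer $\le\alpha$, and $\widehat{B}_n(f)(x):=\sum_{k=0}^n \left\langle f\left(\frac{k}{n}\right)\binom{n}{k}\right\rangle x^k(1-x)^{n-k}$, where $\langle\alpha\rangle$ is the integer nearest to $\alpha$ (when $\alpha$ is a half-integer, $\langle\alpha\rangle$ may be either neighbouring integer, chosen arbitrarily; the result holds for any such choice). *)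

(* Defs.v *)
From HB Require Import structures.
From mathcomp Require Import all_boot all_order all_algebra.
From mathcomp Require Import all_classical all_reals all_analysis.
Set Implicit Arguments. Unset Strict Implicit. Unset Printing Implicit Defensive.
Import Order.TTheory GRing.Theory Num.Theory.
Local Open Scope classical_set_scope.
Local Open Scope ring_scope.

Definition convex01 (R : realType) (g : R -> R) : Prop :=
  forall x y l : R, 0 <= x <= 1 -> 0 <= y <= 1 -> 0 <= l <= 1 ->
    g (l * x + (1 - l) * y) <= l * g x + (1 - l) * g y.
Definition concave01 (R : realType) (g : R -> R) : Prop :=
  forall x y l : R, 0 <= x <= 1 -> 0 <= y <= 1 -> 0 <= l <= 1 ->
    l * g x + (1 - l) * g y <= g (l * x + (1 - l) * y).

Definition bern_int (R : realType) (n : nat) (a : nat -> int) (x : R) : R :=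
  \sum_(k < n.+1) (a k)%:~R * x ^+ k * (1 - x) ^+ (n - k).

Definition bcoef (R : realType) (f : R -> R) (n k : nat) : R :=
  f (k%:R / n%:R) * ('C(n, k))%:R.

Definition Btilde (R : realType) (f : R -> R) (n : nat) (x : R) : R :=
  bern_int n (fun k => Num.floor (bcoef f n k)) x.

(* a is an admissible nearest-integer rounding of the coefficients
   (either neighbour allowed at half-integers) *)
Definition nearest_coefs (R : realType) (f : R -> R) (n : nat) (a : nat -> int) : Prop :=
  forall k : nat, (k <= n)%N -> `| bcoef f n k - (a k)%:~R | <= 2^-1.

Definition Phi_integrand (R : realType) (n : nat) (x t : R) : R :=
  (t ^+ 2 + (1 - t) ^+ 2) *
  (((n%:R * x - 3) * t ^+ 2 * (1 - t) ^+ (n - 2)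
    - (n%:R * x - 2) * t ^+ 3 * (1 - t) ^+ (n - 3)
    + t `^ (n%:R * x) * (1 - t) `^ (n%:R * (1 - x)))
   / (1 - 2 * t) ^+ 2).

Definition Phi (R : realType) (n : nat) (x : R) : R :=
  n.+1%:R * Rintegral (@lebesgue_measure R) `[0, 1] (Phi_integrand n x).

(* Main.v *)
Require Import Defs.
From HB Require Import structures.
From mathcomp Require Import all_boot all_order all_algebra.
From mathcomp Require Import all_classical all_reals all_analysis.
From mathcomp Require Import ring lra.
Import Order.TTheory GRing.Theory Num.Theory.
Local Open Scope ring_scope.

Set Implicit Arguments. Unset Strict Implicit. Unset Printing Implicit Defensive.

Section B.
Variable R : realType.

Lemma D1_horner (q : {poly R}) : 'D_1 (horner q) = horner q^`().
Proof. by apply/funext => z; rewrite derivE derive1E. Qed.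

Lemma D1_hornerE (q : {poly R}) z : 'D_1 (horner q) z = q^`().[z].
Proof. by rewrite -derive1E -derivE. Qed.

Lemma poly_convex01 (p : {poly R}) :
  (forall x, 0 < x < 1 -> 0 <= (p^`()^`()).[x]) -> convex01 (horner p).
Proof.
move=> H x y l /andP[x0 x1] /andP[y0 y1] /andP[l0 l1].
wlog xy : x y l x0 x1 y0 y1 l0 l1 / x <= y.
  move=> W; case: (leP x y) => [|/ltW yx]; first exact: W.
  have l0' : 0 <= 1 - l by rewrite subr_ge0.
  have l1' : 1 - l <= 1 by rewrite lerBlDr lerDl.
  have := W y x (1 - l) y0 y1 x0 x1 l0' l1' yx.
  have -> : 1 - (1 - l) = l by ring.
  by rewrite addrC (addrC (_ * p.[y])).
have := @second_derivative_convex R (horner p) x y _ _ _ _ _ (Itv01 l0 l1) xy.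
rewrite !convRE /=; apply.
- move=> z /andP[xz zy]; rewrite D1_horner D1_hornerE; apply: H.
  by rewrite (le_lt_trans x0 xz) (lt_le_trans zy y1).
- exact/cvg_at_left_filter/continuous_horner.
- exact/cvg_at_right_filter/continuous_horner.
- by move=> z _; exact: derivable_horner.
- by move=> z _; rewrite D1_horner; exact: derivable_horner.
Qed.
Definition bB n (b : nat -> R) : {poly R} :=
  \sum_(k < n.+1) (b k * 'C(n,k)%:R) *: ('X^k * (1 - 'X)^+(n-k)).

Lemma deriv_onemX m : ((1 - 'X : {poly R}) ^+ m)^`() = - ((1 - 'X) ^+ m.-1 *+ m).
Proof.
by rewrite deriv_exp derivB derivX -[1]/(1%:P) derivC sub0r mulN1r mulNrn.
Qed.

Lemma bB_deriv n b : (bB n.+1 b)^`() = n.+1%:R *: bB n (fun k => b k.+1 - b k).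
Proof.
rewrite /bB (big_morph _ (@derivD _) (@deriv0 _)).
rewrite (eq_bigr (fun k : 'I_n.+2 => ((b k * 'C(n.+1,k)%:R) * k%:R) *: ('X^(k.-1) * (1-'X)^+(n.+1-k))
   - ((b k * 'C(n.+1,k)%:R) * (n.+1-k)%:R) *: ('X^k * (1-'X)^+(n-k)))%R); last first.
  move=> k _; rewrite derivZ derivM derivXn deriv_onemX.
  have -> : (n.+1 - k).-1 = (n - k)%N by rewrite -subn1 subnAC subn1.
  rewrite -!mul_polyC !polyCM !polyC_natr.
  ring.
rewrite sumrB [X in X - _]big_ord_recl [X in _ - X]big_ord_recr /= !subnn !mulr0 !scale0r add0r addr0.
rewrite scaler_sumr -sumrB; apply: eq_bigr => i _.
rewrite /bump /= add1n subSS add0n.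
have h1 : 'C(n.+1,i.+1)%:R * i.+1%:R = n.+1%:R * 'C(n,i)%:R :> R.
  by rewrite -!natrM mul_bin_diag mulnC.
have h2 : 'C(n.+1,i)%:R * (n.+1 - i)%:R = n.+1%:R * 'C(n,i)%:R :> R.
  by rewrite -!natrM mul_bin_down mulnC.
rewrite -!mulrA h1 h2 scalerA -scalerBl; congr (_ *: _); ring.
Qed.

Lemma bB_horner n b x : (bB n b).[x] = \sum_(k < n.+1) b k * 'C(n,k)%:R * x^+k * (1-x)^+(n-k).
Proof.
rewrite /bB horner_sum; apply: eq_bigr => k _.
rewrite hornerZ hornerM hornerXn horner_exp !hornerE //.
Qed.

Lemma bB_ge0 n b x : 0 <= x <= 1 -> (forall k, (k <= n)%N -> 0 <= b k) -> 0 <= (bB n b).[x].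
Proof.
move=> /andP[x0 x1] hb; rewrite bB_horner; apply: sumr_ge0 => k _.
rewrite !mulr_ge0 ?exprn_ge0 ?subr_ge0 ?hb ?ler0n //.
by rewrite -ltnS.
Qed.

Lemma bB_convex n b : (2 <= n)%N ->
  (forall k, (k.+2 <= n)%N -> 0 <= b k - 2 * b k.+1 + b k.+2) -> convex01 (horner (bB n b)).
Proof.
case: n => [|[|m]] // _ hb; apply: poly_convex01 => x /andP[x0 x1].
rewrite bB_deriv derivZ bB_deriv !hornerZ !mulr_ge0 ?ler0n //.
apply: bB_ge0; first by rewrite !ltW.
move=> k km; have := hb k; rewrite !ltnS => /(_ km) h.
lra.
Qed.

End B.

Section P.
Variable R : realType.
Variable n : nat.
Hypothesis n3 : (3 <= n)%N.

Let n0 : n%:R != 0 :> R.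
Proof. by rewrite pnatr_eq0 -lt0n (leq_trans _ n3). Qed.

Definition gg (j : nat) (t : R) := Phi_integrand n (j%:R / n%:R) t.
Definition NN (j : nat) (t : R) : R :=
  (j%:R - 3) * t ^+ 2 * (1 - t) ^+ (n - 2) - (j%:R - 2) * t ^+ 3 * (1 - t) ^+ (n - 3)
  + t ^+ j * (1 - t) ^+ (n - j).

Lemma gg_eq j t : (j <= n)%N -> 0 <= t <= 1 ->
  gg j t = (t ^+ 2 + (1 - t) ^+ 2) * (NN j t / (1 - 2 * t) ^+ 2).
Proof.
move=> jn /andP[t0 t1]; rewrite /gg /Phi_integrand /NN.
have -> : n%:R * (j%:R / n%:R) = j%:R :> R by rewrite mulrC divfK.
have -> : n%:R * (1 - j%:R / n%:R) = (n - j)%N%:R :> R.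
  by rewrite mulrBr mulr1 mulrC divfK // natrB.
by rewrite !powR_mulrn // subr_ge0.
Qed.

Definition PP (i : nat) (t : R) : R :=
  t ^+ i.+2 * (1 - t) ^+ (n - i.+2) + t ^+ i * (1 - t) ^+ (n - i).

Lemma gg_rec i t : (i.+2 <= n)%N -> 0 <= t <= 1 -> t != 2^-1 ->
  gg i t - 2 * gg i.+1 t + gg i.+2 t = PP i t.
Proof.
move=> hi ht th.
have hi1 : (i.+1 <= n)%N by apply: ltnW.
have hi0 : (i <= n)%N by apply: ltnW.
rewrite !gg_eq // /NN /PP.
have d0 : (1 - 2 * t) != 0.
  rewrite subr_eq0; apply: contra th => /eqP h.
  apply/eqP; lra.
set m := (n - i.+2)%N.
have -> : (n - i = m.+2)%N by rewrite /m subnSK // subnSK // ltnW.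
have -> : (n - i.+1 = m.+1)%N by rewrite /m subnSK.
rewrite (exprS t i.+1) (exprS t i) (exprS (1-t) m.+1) (exprS (1-t) m).
by field.
Qed.

Lemma gg2 t : 0 <= t <= 1 -> gg 2 t = 0.
Proof.
move=> ht; rewrite gg_eq ?(leq_trans _ n3) //.
have -> : NN 2 t = 0 by rewrite /NN subn2; ring.
by rewrite mul0r mulr0.
Qed.

Lemma gg3 t : 0 <= t <= 1 -> gg 3 t = 0.
Proof.
move=> ht; rewrite gg_eq //.
have -> : NN 3 t = 0 by rewrite /NN; ring.
by rewrite mul0r mulr0.
Qed.

Local Notation mu := (@lebesgue_measure R).
Definition Dp : set R := `[0, 1]%classic `\ 2^-1.

Lemma mDp : measurable Dp.
Proof. by apply: measurableD. Qed.

Lemma Dp01 t : t \in Dp -> 0 <= t <= 1 /\ t != 2^-1.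
Proof.
rewrite inE /Dp /= => -[]; rewrite /= in_itv /= => -> /eqP //.
Qed.

Definition intD (f : R -> R) := mu.-integrable Dp (EFin \o f).

Lemma intD_XM a b : intD (XMonemX a b).
Proof.
have := @integrable_XMonemX R a b; apply: integrableS => //; first exact: mDp.
by move=> t [].
Qed.

Lemma intD_comb f1 f2 f3 c2 c3 : intD f1 -> intD f2 -> intD f3 ->
  intD (fun t => f1 t + c2 * f2 t + c3 * f3 t).
Proof.
move=> i1 i2 i3.
have := @integrableD _ _ _ mu _ mDp _ _ (@integrableD _ _ _ mu _ mDp _ _ i1 (@integrableZl _ _ _ mu _ mDp c2 _ i2)) (@integrableZl _ _ _ mu _ mDp c3 _ i3).
by apply: (@eq_integrable _ _ _ mu _ mDp) => t _.
Qed.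

Lemma intD_ext f g : intD f -> {in Dp, f =1 g} -> intD g.
Proof.
move=> i fg; apply: (@eq_integrable _ _ _ mu _ mDp _ _ _ i) => t tD /=; by rewrite fg.
Qed.

Lemma intD_PP i : intD (PP i).
Proof.
apply: (intD_ext (f := fun t => XMonemX i.+2 (n - i.+2) t + 0 * XMonemX i.+2 (n - i.+2) t
   + 1 * XMonemX i (n - i) t)).
  by apply: intD_comb; apply: intD_XM.
by move=> t _; rewrite /PP /XMonemX; ring.
Qed.

Lemma intD_gg j : (j <= n)%N -> intD (gg j).
Proof.
have z2 : intD (gg 2).
  apply: (intD_ext (f := fun t => XMonemX 0 0 t + (-1) * XMonemX 0 0 t + 0 * XMonemX 0 0 t)).
    by apply: intD_comb; apply: intD_XM.
  by move=> t /Dp01 [ht _]; rewrite gg2 //; ring.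
have z3 : intD (gg 3).
  apply: (intD_ext (f := fun t => XMonemX 0 0 t + (-1) * XMonemX 0 0 t + 0 * XMonemX 0 0 t)).
    by apply: intD_comb; apply: intD_XM.
  by move=> t /Dp01 [ht _]; rewrite gg3 //; ring.
have base : forall i, (i.+3 <= n)%N -> intD (gg i.+2) /\ intD (gg i.+3).
  elim => [|i IH] hi; first by [].
  have [h2 h3] := IH (ltnW hi).
  split => //.
  apply: (intD_ext (f := fun t => PP i.+2 t + (-1) * gg i.+2 t + 2 * gg i.+3 t)).
    exact: intD_comb (intD_PP _) h2 h3.
  move=> t /Dp01 [ht th]; have := gg_rec hi ht th; lra.
case: j => [|[|j]] hj.
- apply: (intD_ext (f := fun t => PP 0 t + 2 * gg 1 t + (-1) * gg 2 t)).
    apply: (@intD_comb (PP 0) (gg 1) (gg 2) 2 (-1) (intD_PP 0) _ z2).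
    apply: (intD_ext (f := fun t => PP 1 t + 2 * gg 2 t + (-1) * gg 3 t)).
      exact: intD_comb (intD_PP _) z2 z3.
    move=> t /Dp01 [ht th]; have := gg_rec n3 ht th; lra.
  move=> t /Dp01 [ht th]; have := gg_rec (ltnW n3) ht th; lra.
- apply: (intD_ext (f := fun t => PP 1 t + 2 * gg 2 t + (-1) * gg 3 t)).
    exact: intD_comb (intD_PP _) z2 z3.
  move=> t /Dp01 [ht th]; have := gg_rec n3 ht th; lra.
- case: j hj => [|j] hj; first by [].
  by have [] := base j hj.
Qed.


Lemma Rint01_Dp f : intD f -> Rintegral mu `[0, 1]%classic f = Rintegral mu Dp f.
Proof.
move=> i; rewrite /Rintegral /Dp integral_setD1 //.
- exact: mDp.
- exact: (measurable_int mu i).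
Qed.

Lemma Phi_J j : (j <= n)%N -> Phi n (j%:R / n%:R) = n.+1%:R * Rintegral mu Dp (gg j).
Proof. by move=> hj; rewrite /Phi (Rint01_Dp (intD_gg hj)). Qed.

Lemma RintXM a b : Rintegral mu Dp (XMonemX a b) = beta_fun a.+1 b.+1.
Proof. by rewrite -Rint01_Dp ?intD_XM // Rintegral_mkcond. Qed.

Lemma beta_C a b : (a + b = n)%N -> n.+1%:R * beta_fun a.+1 b.+1 = ('C(n,a)%:R)^-1 :> R.
Proof.
move=> hab; rewrite (@beta_fun_fact R) hab.
have hb : b = (n - a)%N by rewrite -hab addKn.
have hf := bin_fact (leq_addr b a); rewrite hab -hb in hf.
rewrite factS -hf !natrM.
have c0 : 'C(n, a)%:R != 0 :> R by rewrite pnatr_eq0 -lt0n bin_gt0 -hab leq_addr.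
have a0 : a`!%:R != 0 :> R by rewrite pnatr_eq0 -lt0n fact_gt0.
have b0 : b`!%:R != 0 :> R by rewrite pnatr_eq0 -lt0n fact_gt0.
have n1 : n.+1%:R != 0 :> R by rewrite pnatr_eq0.
field; rewrite c0 a0 b0 /=; by rewrite addrC natr1 pnatr_eq0.
Qed.

Lemma dPhi k : (k.+2 <= n)%N ->
  Phi n (k%:R / n%:R) - 2 * Phi n (k.+1%:R / n%:R) + Phi n (k.+2%:R / n%:R)
  = ('C(n,k)%:R)^-1 + ('C(n,k.+2)%:R)^-1 :> R.
Proof.
move=> hk.
have hk1 : (k.+1 <= n)%N by apply: ltnW.
have hk0 : (k <= n)%N by apply: ltnW.
rewrite !Phi_J //.
have E : Rintegral mu Dp (gg k) - 2 * Rintegral mu Dp (gg k.+1) + Rintegral mu Dp (gg k.+2)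
   = Rintegral mu Dp (PP k).
  rewrite -RintegralZl; [|exact: mDp|exact: intD_gg].
  rewrite -RintegralB; [|exact: mDp|exact: intD_gg|].
    rewrite -RintegralD; [|exact: mDp| |exact: intD_gg].
      by apply: eq_Rintegral => t /Dp01 [ht th]; rewrite gg_rec.
    apply: (intD_ext (f := fun t => gg k t + (-2) * gg k.+1 t + 0 * gg k.+1 t)).
      by apply: intD_comb; apply: intD_gg.
    by move=> t _; rewrite /gg; ring.
  apply: (intD_ext (f := fun t => gg k.+1 t + 1 * gg k.+1 t + 0 * gg k.+1 t)).
    by apply: intD_comb; apply: intD_gg.
  by move=> t _; rewrite /gg; ring.
have E2 : Rintegral mu Dp (PP k) = beta_fun k.+3 (n - k.+2).+1 + beta_fun k.+1 (n - k).+1.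
  rewrite -!RintXM -RintegralD; [|exact: mDp|exact: intD_XM|exact: intD_XM].
  by apply: eq_Rintegral => t _; rewrite /PP /XMonemX.
have B1 := @beta_C k.+2 (n - k.+2) (subnKC hk).
have B2 := @beta_C k (n - k) (subnKC hk0).
transitivity (n.+1%:R * (Rintegral mu Dp (gg k) - 2 * Rintegral mu Dp (gg k.+1)
   + Rintegral mu Dp (gg k.+2))); first by ring.
rewrite E E2 mulrDr B1 B2; ring.
Qed.

End P.

Section M.
Variable R : realType.

Lemma convex01_ext (g h : R -> R) : (forall x, g x = h x) -> convex01 h -> convex01 g.
Proof. by move=> e H x y l hx hy hl; rewrite !e; apply: H. Qed.

Lemma bern_bB n (a : nat -> int) (x : R) :
  bern_int n a x = (bB n (fun k => (a k)%:~R / 'C(n,k)%:R)).[x].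
Proof.
rewrite bB_horner /bern_int; apply: eq_bigr => k _.
by rewrite divfK // pnatr_eq0 -lt0n bin_gt0 -ltnS.
Qed.

Lemma bern_convex n (a : nat -> int) : (2 <= n)%N ->
  (forall k, (k.+2 <= n)%N -> (0 : R) <= (a k)%:~R / 'C(n,k)%:R - 2 * ((a k.+1)%:~R / 'C(n,k.+1)%:R)
     + (a k.+2)%:~R / 'C(n,k.+2)%:R) -> convex01 (@bern_int R n a).
Proof.
move=> n2 h; apply: (convex01_ext (bern_bB n a)).
exact: bB_convex.
Qed.

Lemma bern_concave n (a : nat -> int) : (2 <= n)%N ->
  (forall k, (k.+2 <= n)%N -> (a k)%:~R / 'C(n,k)%:R - 2 * ((a k.+1)%:~R / 'C(n,k.+1)%:R)
     + (a k.+2)%:~R / 'C(n,k.+2)%:R <= (0 : R)) -> concave01 (@bern_int R n a).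
Proof.
move=> n2 h.
have : convex01 (horner (bB n (fun k => - ((a k)%:~R / 'C(n,k)%:R : R)))).
  apply: bB_convex => // k hk; have := h k hk; lra.
move=> H x y l hx hy hl; have := H x y l hx hy hl.
have E (z : R) : (bB n (fun k => - ((a k)%:~R / 'C(n,k)%:R : R))).[z] = - bern_int n a z.
  rewrite bern_bB !bB_horner -sumrN; apply: eq_bigr => k _; ring.
rewrite !E; lra.
Qed.

Lemma binv n k : (k.+2 <= n)%N ->
  2 * ('C(n,k.+1)%:R)^-1 <= ('C(n,k)%:R)^-1 + ('C(n,k.+2)%:R)^-1 :> R.
Proof.
move=> hk.
have h1 := mul_bin_left n k.
have h2 := mul_bin_left n k.+1.
have e : (n - k = (n - k.+1).+1)%N by rewrite subnSK // ltnW.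
rewrite e in h1.
have pA : (0 < 'C(n,k))%N by rewrite bin_gt0 ltnW // ltnW.
have pM : (0 < 'C(n,k.+1))%N by rewrite bin_gt0 ltnW.
have pB : (0 < 'C(n,k.+2))%N by rewrite bin_gt0.
have pv : (0 < n - k.+1)%N by rewrite subn_gt0.
move: h1 h2 pA pM pB pv.
set A := 'C(n,k); set M := 'C(n,k.+1); set B := 'C(n,k.+2); set v := (n - k.+1)%N.
move=> h1 h2 pA pM pB pv.
have r1 : k.+1%:R * M%:R = (v%:R + 1) * A%:R :> R by rewrite -natrM h1 natrM -natr1.
have r2 : k.+2%:R * B%:R = v%:R * M%:R :> R by rewrite -!natrM h2.
have A0 : A%:R != 0 :> R by rewrite pnatr_eq0 -lt0n.
have B0 : B%:R != 0 :> R by rewrite pnatr_eq0 -lt0n.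
have M0 : 0 < M%:R :> R by rewrite ltr0n.
have v0 : 0 < v%:R :> R by rewrite ltr0n.
have eA : (A%:R)^-1 = (v%:R + 1) / (k.+1%:R * M%:R) :> R.
  rewrite r1; field; rewrite A0 /=; rewrite gt_eqF //; lra.
have eB : (B%:R)^-1 = k.+2%:R / (v%:R * M%:R) :> R.
  rewrite -r2; field; rewrite B0 /=; rewrite gt_eqF //; lra.
rewrite eA eB -subr_ge0.
set u := k%:R : R.
have u0 : 0 <= u by rewrite ler0n.
have -> : (v%:R + 1) / (k.+1%:R * M%:R) + k.+2%:R / (v%:R * M%:R) - 2 * (M%:R)^-1
   = ((u + 1 - v%:R) ^+ 2 + u + 1 + v%:R) / ((u + 1) * v%:R * M%:R) :> R.
  have ek1 : k.+1%:R = u + 1 :> R by rewrite /u natr1.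
  have ek2 : k.+2%:R = u + 2 :> R by rewrite -natr1 ek1; ring.
  rewrite ek1 ek2; field.
  by rewrite !gt_eqF //; lra.
apply: divr_ge0; last by rewrite !mulr_ge0 // ?ltW //; lra.
have := sqr_ge0 (u + 1 - v%:R); lra.
Qed.

End M.

Unset Implicit Arguments.

Theorem theorem1p10 (R : realType) (f : R -> R) (n : nat) :
  f 0 \is a Num.int -> f 1 \is a Num.int -> (3 <= n)%N ->
  (convex01 (fun x => f x - Phi n x) ->
     convex01 (Btilde f n) /\
     (forall a : nat -> int, nearest_coefs f n a -> convex01 (@bern_int R n a)))
  /\
  (concave01 (fun x => f x + Phi n x) ->
     concave01 (Btilde f n) /\
     (forall a : nat -> int, nearest_coefs f n a -> concave01 (@bern_int R n a))).
Proof.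
move=> _ _ n3.
have n2 : (2 <= n)%N by apply: ltnW.
have n0 : n%:R != 0 :> R by rewrite pnatr_eq0 -lt0n (leq_trans _ n3).
have npos : 0 < n%:R :> R by rewrite ltr0n (leq_trans _ n3).
have hx : forall j : nat, (j <= n)%N -> (0 : R) <= (j%:R / n%:R : R) <= (1 : R).
  move=> j hj; apply/andP; split; first by rewrite divr_ge0 ?ler0n.
  by rewrite ler_pdivrMr // mul1r ler_nat.
have hl : (0 : R) <= (2^-1 : R) <= (1 : R) by apply/andP; split; lra.
have hmid : forall k : nat, 2^-1 * (k%:R / n%:R) + (1 - 2^-1) * (k.+2%:R / n%:R)
    = k.+1%:R / n%:R :> R.
  move=> k; have e1 : k.+1%:R = k%:R + 1 :> R by rewrite natr1.
  have e2 : k.+2%:R = k%:R + 2 :> R by rewrite -natr1 e1; ring.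
  by rewrite e1 e2; field.
have Cpos : forall j : nat, (j <= n)%N -> 0 < 'C(n,j)%:R :> R.
  by move=> j hj; rewrite ltr0n bin_gt0.
have hc : forall (a : nat -> int) k, (k <= n)%N ->
    (a k)%:~R / 'C(n,k)%:R
    = f (k%:R / n%:R) - (bcoef f n k - (a k)%:~R) / 'C(n,k)%:R :> R.
  move=> a k hk; have := Cpos k hk; rewrite /bcoef => C0.
  by field; rewrite gt_eqF.
have rb : forall (e lo hi : R) j, (j <= n)%N -> lo <= e <= hi ->
    lo * ('C(n,j)%:R)^-1 <= e / 'C(n,j)%:R <= hi * ('C(n,j)%:R)^-1.
  move=> e lo hi j hj /andP[h1 h2]; have ci : 0 < ('C(n,j)%:R : R)^-1 by rewrite invr_gt0 Cpos.
  by rewrite !ler_pM2r // h1 h2.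
have fl : forall j : nat, (j <= n)%N ->
    0 <= bcoef f n j - (Num.floor (bcoef f n j))%:~R <= 1.
  move=> j hj; have h1 := floor_le (bcoef f n j).
  have h2 := floorD1_gt (bcoef f n j); rewrite intrD in h2.
  apply/andP; split; lra.
have nr : forall a, nearest_coefs f n a -> forall j, (j <= n)%N ->
    - (2^-1 : R) <= bcoef f n j - (a j)%:~R <= 2^-1.
  move=> a ha j hj; have := ha j hj; rewrite ler_norml => /andP[h1 h2].
  by apply/andP; split.
split.
- move=> hconv.
  have D2 : forall k, (k.+2 <= n)%N ->
      ('C(n,k)%:R : R)^-1 + ('C(n,k.+2)%:R)^-1 <=
      f (k%:R / n%:R) - 2 * f (k.+1%:R / n%:R) + f (k.+2%:R / n%:R).
    move=> k hk; have hk1 : (k.+1 <= n)%N by apply: ltnW.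
    have hk0 : (k <= n)%N by apply: ltnW.
    have := hconv _ _ _ (hx k hk0) (hx k.+2 hk) hl; rewrite /= hmid.
    have := @dPhi R n n3 k hk; lra.
  split.
  + apply: bern_convex => // k hk.
    have hk1 : (k.+1 <= n)%N by apply: ltnW.
    have hk0 : (k <= n)%N by apply: ltnW.
    have := hc (fun k => Num.floor (bcoef f n k)) k hk0.
    have := hc (fun k => Num.floor (bcoef f n k)) k.+1 hk1.
    have := hc (fun k => Num.floor (bcoef f n k)) k.+2 hk.
    rewrite /=.
    have := rb _ _ _ _ hk0 (fl k hk0); have := rb _ _ _ _ hk1 (fl k.+1 hk1).
    have := rb _ _ _ _ hk (fl k.+2 hk); have := D2 k hk.
    lra.
  + move=> a ha; apply: bern_convex => // k hk.
    have hk1 : (k.+1 <= n)%N by apply: ltnW.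
    have hk0 : (k <= n)%N by apply: ltnW.
    have := hc a k hk0; have := hc a k.+1 hk1; have := hc a k.+2 hk.
    have := rb _ _ _ _ hk0 (nr a ha k hk0); have := rb _ _ _ _ hk1 (nr a ha k.+1 hk1).
    have := rb _ _ _ _ hk (nr a ha k.+2 hk); have := D2 k hk; have := binv R hk.
    lra.
- move=> hconc.
  have D2 : forall k, (k.+2 <= n)%N ->
      f (k%:R / n%:R) - 2 * f (k.+1%:R / n%:R) + f (k.+2%:R / n%:R) <=
      - (('C(n,k)%:R : R)^-1 + ('C(n,k.+2)%:R)^-1).
    move=> k hk; have hk1 : (k.+1 <= n)%N by apply: ltnW.
    have hk0 : (k <= n)%N by apply: ltnW.
    have := hconc _ _ _ (hx k hk0) (hx k.+2 hk) hl; rewrite /= hmid.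
    have := @dPhi R n n3 k hk; lra.
  split.
  + apply: bern_concave => // k hk.
    have hk1 : (k.+1 <= n)%N by apply: ltnW.
    have hk0 : (k <= n)%N by apply: ltnW.
    have := hc (fun k => Num.floor (bcoef f n k)) k hk0.
    have := hc (fun k => Num.floor (bcoef f n k)) k.+1 hk1.
    have := hc (fun k => Num.floor (bcoef f n k)) k.+2 hk.
    rewrite /=.
    have := rb _ _ _ _ hk0 (fl k hk0); have := rb _ _ _ _ hk1 (fl k.+1 hk1).
    have := rb _ _ _ _ hk (fl k.+2 hk); have := D2 k hk; have := binv R hk.
    lra.
  + move=> a ha; apply: bern_concave => // k hk.
    have hk1 : (k.+1 <= n)%N by apply: ltnW.
    have hk0 : (k <= n)%N by apply: ltnW.
    have := hc a k hk0; have := hc a k.+1 hk1; have := hc a k.+2 hk.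
    have := rb _ _ _ _ hk0 (nr a ha k hk0); have := rb _ _ _ _ hk1 (nr a ha k.+1 hk1).
    have := rb _ _ _ _ hk (nr a ha k.+2 hk); have := D2 k hk; have := binv R hk.
    lra.
Qed.
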